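(* Let $S\subseteq\mathbb{F}_2^{27}$ be the linear subspace spanned by the six vectors (written as bit strings, coordinate $1$ leftmost, coordinate $27$ rightmost) $\xi^1 = 100010001010101010100011110$, $\xi^2 = 101010111001100000001010101$, $\xi^3 = 011001100111100111100110011$, $\xi^4 = 000111100000011001100001111$, $\xi^5 = 000000011111111000011111111$, $\xi^6 = 000000000000000111111111111$, and let $Q(x)= x_{1}x_{2} + x_{1}x_{3} + x_{1}x_{8} + x_{2}x_{4} + x_{2}x_{8} + x_{2}x_{16} + x_{3}x_{4} + x_{3}x_{8} + x_{3}x_{16} + x_{4}x_{8} + x_{8}x_{16}$ (mod $2$). Let $e=(e_1,\dots,e_{27})=(3, 5, 7, 5, 1, 3, 5, 7, 1, 3, 5, 5, 3, 7, 3, 3, 7, 1, 7, 3, 1, 5, 5, 5, 3, 5, 3)$ and $c_j=e^{\pi i e_j/4}$. Then $(-1)^{Q(x)}=\prod_{j=1}^{27}c_j^{x_j}$ for every $x\in S$, but there do not exist $c'_1,\dots,c'_{27}\in\{\pm1,\pm i\}$ with $(-1)^{Q(x)}=\prod_{j=1}^{27}(c'_j)^{x_j}$ for every $x\in S$. In particular the following statement (QFP) is false in general: ''if $S$ is a linear subspace of $\mathbb{F}_2^n$, $Q:\mathbb{F}_2^n\to\mathbb{F}_2$ is a quadratic function, and there exist complex phases $c_j$ with $(-1)^{Q(x)}=\prod_j c_j^{x_j}$ for all $x\in S$, then the phases can be chosen from $\{\pm1,\pm i\}$.''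
   Context: Vectors $x\in\mathbb{F}_2^{27}$ have coordinates $x_j\in\{0,1\}$, which are used as integer exponents in $c_j^{x_j}$. *)

(* Defs.v *)
From HB Require Import structures.
From mathcomp Require Import all_boot all_order all_algebra all_field.
Set Implicit Arguments. Unset Strict Implicit. Unset Printing Implicit Defensive.
Import Order.TTheory GRing.Theory Num.Theory.
Local Open Scope ring_scope.

(* Vectors of F_2^27 are row vectors 'rV['F_2]_27; paper coordinate j (1..27)
   is the ordinal index j-1. *)
Definition bitvec (s : seq nat) : 'rV['F_2]_27 :=
  \row_(j < 27) (nth 0%N s j)%:R.

Definition xi1 := bitvec [:: 1;0;0;0;1;0;0;0;1;0;1;0;1;0;1;0;1;0;1;0;0;0;1;1;1;1;0]%N.
Definition xi2 := bitvec [:: 1;0;1;0;1;0;1;1;1;0;0;1;1;0;0;0;0;0;0;0;1;0;1;0;1;0;1]%N.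
Definition xi3 := bitvec [:: 0;1;1;0;0;1;1;0;0;1;1;1;1;0;0;1;1;1;1;0;0;1;1;0;0;1;1]%N.
Definition xi4 := bitvec [:: 0;0;0;1;1;1;1;0;0;0;0;0;0;1;1;0;0;1;1;0;0;0;0;1;1;1;1]%N.
Definition xi5 := bitvec [:: 0;0;0;0;0;0;0;1;1;1;1;1;1;1;1;0;0;0;0;1;1;1;1;1;1;1;1]%N.
Definition xi6 := bitvec [:: 0;0;0;0;0;0;0;0;0;0;0;0;0;0;0;1;1;1;1;1;1;1;1;1;1;1;1]%N.

(* 6 x 27 matrix whose rows are xi^1..xi^6; S is its row space. *)
Definition Xi : 'M['F_2]_(6, 27) :=
  \matrix_(k < 6, j < 27)
    (nth xi1 [:: xi1; xi2; xi3; xi4; xi5; xi6] k) 0 j.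

Definition xc (x : 'rV['F_2]_27) (k : nat) : 'F_2 := x 0 (inord k.-1).

Definition Qf (x : 'rV['F_2]_27) : 'F_2 :=
  xc x 1 * xc x 2 + xc x 1 * xc x 3 + xc x 1 * xc x 8 + xc x 2 * xc x 4
  + xc x 2 * xc x 8 + xc x 2 * xc x 16 + xc x 3 * xc x 4 + xc x 3 * xc x 8
  + xc x 3 * xc x 16 + xc x 4 * xc x 8 + xc x 8 * xc x 16.

Definition bitn (b : 'F_2) : nat := nat_of_ord b.

Definition eseq : seq nat :=
  [:: 3; 5; 7; 5; 1; 3; 5; 7; 1; 3; 5; 5; 3; 7; 3; 3; 7; 1; 7; 3; 1; 5; 5; 5; 3; 5; 3]%N.

(* zeta8 = e^{pi i/4} = (1 + i)/sqrt 2 in the algebraic complex numbers *)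
Definition zeta8 : algC := (1 + 'i) / sqrtC 2.

Definition cph (j : 'I_27) : algC := zeta8 ^+ nth 0%N eseq j.

(* Main.v *)
Require Import Defs.
From HB Require Import structures.
From mathcomp Require Import all_boot all_order all_algebra all_field.
Import Order.TTheory GRing.Theory Num.Theory.
Local Open Scope ring_scope.
Lemma F2cases (u : 'F_2) : u = 0 \/ u = 1.
Proof. case: u => [[|[|n]] Hu]; [left|right|]; try by apply: val_inj. by []. Qed.
Lemma bitnD (u v : 'F_2) : bitn (u + v) = ((bitn u + bitn v) %% 2)%N.
Proof. by case: (F2cases u) => ->; case: (F2cases v) => ->. Qed.
Lemma bitnM (u v : 'F_2) : bitn (u * v) = ((bitn u * bitn v) %% 2)%N.
Proof. by case: (F2cases u) => ->; case: (F2cases v) => ->. Qed.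
Lemma bitn_nat (n : nat) : bitn (n%:R : 'F_2) = (n %% 2)%N.
Proof. elim: n => [//|n IH]. by rewrite -[n.+1]addn1 natrD bitnD IH modnDml. Qed.
Definition l1 := [:: 1;0;0;0;1;0;0;0;1;0;1;0;1;0;1;0;1;0;1;0;0;0;1;1;1;1;0]%N.
Definition l2 := [:: 1;0;1;0;1;0;1;1;1;0;0;1;1;0;0;0;0;0;0;0;1;0;1;0;1;0;1]%N.
Definition l3 := [:: 0;1;1;0;0;1;1;0;0;1;1;1;1;0;0;1;1;1;1;0;0;1;1;0;0;1;1]%N.
Definition l4 := [:: 0;0;0;1;1;1;1;0;0;0;0;0;0;1;1;0;0;1;1;0;0;0;0;1;1;1;1]%N.
Definition l5 := [:: 0;0;0;0;0;0;0;1;1;1;1;1;1;1;1;0;0;0;0;1;1;1;1;1;1;1;1]%N.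
Definition l6 := [:: 0;0;0;0;0;0;0;0;0;0;0;0;0;0;0;1;1;1;1;1;1;1;1;1;1;1;1]%N.
Definition LL := [:: l1; l2; l3; l4; l5; l6].
Definition addm (a b : nat) := ((a + b) %% 2)%N.
Definition mulm (a b : nat) := ((a * b) %% 2)%N.
Definition fx (b : seq nat) (j : nat) : nat :=
  foldr (fun k acc => addm (mulm (nth 0%N b k) (nth 0%N (nth [::] LL k) j %% 2)) acc) 0%N (iota 0 6).
Definition ab (a : 'rV['F_2]_6) : seq nat := [seq bitn (a 0 (inord k)) | k <- iota 0 6].
Lemma XiE (k : 'I_6) (j : 'I_27) : Xi k j = (nth 0%N (nth [::] LL k) j)%:R.
Proof.
rewrite mxE; case: k => [[|[|[|[|[|[|//]]]]]] ?] /=;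
  by rewrite /xi1 /xi2 /xi3 /xi4 /xi5 /xi6 /bitvec mxE.
Qed.
Lemma entry (a : 'rV['F_2]_6) (j : 'I_27) : bitn ((a *m Xi) 0 j) = fx (ab a) j.
Proof.
rewrite mxE (eq_bigr (fun k : 'I_6 => a 0 (inord k) * (nth 0%N (nth [::] LL k) j)%:R)); last first.
  by move=> k _; rewrite inord_val XiE.
rewrite !big_ord_recl big_ord0 !bitnD !bitnM !bitn_nat.
reflexivity.
Qed.
Definition qf (g : nat -> nat) : nat :=
  addm (addm (addm (addm (addm (addm (addm (addm (addm (addm
   (mulm (g 1) (g 2)) (mulm (g 1) (g 3))) (mulm (g 1) (g 8))) (mulm (g 2) (g 4)))
   (mulm (g 2) (g 8))) (mulm (g 2) (g 16))) (mulm (g 3) (g 4))) (mulm (g 3) (g 8)))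
   (mulm (g 3) (g 16))) (mulm (g 4) (g 8))) (mulm (g 8) (g 16)).
Lemma QfE (x : 'rV['F_2]_27) : bitn (Qf x) = qf (fun k => bitn (xc x k)).
Proof. rewrite /Qf !bitnD !bitnM. reflexivity. Qed.
Lemma qf_ext g h : (forall k, (k <= 16)%N -> g k = h k) -> qf g = qf h.
Proof. by move=> H; rewrite /qf !H. Qed.
Definition qx (b : seq nat) : nat := qf (fun k => fx b k.-1).
Lemma QxE (a : 'rV['F_2]_6) : bitn (Qf (a *m Xi)) = qx (ab a).
Proof.
rewrite QfE /qx; apply: qf_ext => k hk; rewrite /xc entry inordK //.
by apply: leq_ltn_trans (leq_pred k) _; apply: leq_ltn_trans hk _.
Qed.
Lemma sumfold (T : Type) (s : seq T) (F : T -> nat) :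
  (\sum_(i <- s) F i = foldr (fun i acc => F i + acc) 0 s)%N.
Proof. by elim: s => [|i s IH]; rewrite ?big_nil ?big_cons ?IH. Qed.
Lemma sumord (F : nat -> nat) : (\sum_(j < 27) F j = foldr (fun i acc => F i + acc) 0 (iota 0 27))%N.
Proof. by rewrite -(big_mkord xpredT F) sumfold. Qed.
Definition S1 (b : seq nat) : nat :=
  foldr (fun j acc => nth 0 eseq j * fx b j + acc)%N 0%N (iota 0 27).
Definition bits := [:: 0; 1]%N.
Lemma check1 : all (fun b0 => all (fun b1 => all (fun b2 => all (fun b3 => all (fun b4 =>
  all (fun b5 => let b := [:: b0; b1; b2; b3; b4; b5] in (S1 b %% 8 == 4 * qx b)%N)
  bits) bits) bits) bits) bits) bits.
Proof. by vm_compute. Qed.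
Lemma bitn_bits (u : 'F_2) : bitn u \in bits.
Proof. by case: (F2cases u) => ->. Qed.
Lemma key1 (a : 'rV['F_2]_6) : (S1 (ab a) %% 8 = 4 * qx (ab a))%N.
Proof.
apply/eqP; move: check1.
move/allP/(_ _ (bitn_bits (a 0 (inord 0))))/allP/(_ _ (bitn_bits (a 0 (inord 1))))
    /allP/(_ _ (bitn_bits (a 0 (inord 2))))/allP/(_ _ (bitn_bits (a 0 (inord 3))))
    /allP/(_ _ (bitn_bits (a 0 (inord 4))))/allP/(_ _ (bitn_bits (a 0 (inord 5)))).
by [].
Qed.
Definition zeta8' := zeta8.
Lemma z2 : zeta8 ^+ 2 = 'i.
Proof.
rewrite /zeta8 expr_div_n sqrtCK sqrrD sqrCi expr1n mul1r.
rewrite addrAC subrr add0r -mulr_natr mulfK //.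
by rewrite pnatr_eq0.
Qed.
Lemma z4 : zeta8 ^+ 4 = -1.
Proof. by rewrite -[4%N]/(2 * 2)%N exprM z2 sqrCi. Qed.
Lemma z8 : zeta8 ^+ 8 = 1.
Proof. by rewrite -[8%N]/(4 * 2)%N exprM z4 sqrrN expr1n. Qed.
Lemma part1 (x : 'rV['F_2]_27) : (x <= Xi)%MS ->
     (-1 : algC) ^+ bitn (Qf x) = \prod_(j < 27) cph j ^+ bitn (x 0 j).
Proof.
case/submxP=> a ->.
rewrite (eq_bigr (fun j : 'I_27 => zeta8 ^+ (nth 0 eseq j * bitn ((a *m Xi) ord0 j))%N));
  last by move=> j _; rewrite /cph exprM.
rewrite prodrXr.
rewrite (eq_bigr (fun j : 'I_27 => (nth 0 eseq j * fx (ab a) j)%N)); last by move=> j _; rewrite entry.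
rewrite (sumord (fun j => nth 0 eseq j * fx (ab a) j)%N).
rewrite (divn_eq (foldr _ _ _) 8) exprD mulnC exprM z8 expr1n mul1r.
rewrite -/(S1 (ab a)) key1 exprM z4 QxE //.
Qed.
Definition Lc : seq (seq nat) := [:: [:: 0;0;0;1;0;0]; [:: 0;0;0;1;0;0]; [:: 0;0;0;1;0;0]; [:: 0;0;0;1;1;1]; [:: 0;0;0;1;1;1]; [:: 0;0;1;0;0;0]; [:: 0;0;1;0;1;0]; [:: 0;0;1;1;0;0]; [:: 0;0;1;1;0;0]; [:: 0;0;1;1;0;0]; [:: 0;0;1;1;1;1]; [:: 0;0;1;1;1;1]; [:: 0;1;0;0;0;0]; [:: 0;1;0;0;0;0]; [:: 0;1;0;0;0;0]; [:: 0;1;0;0;0;1]; [:: 0;1;0;0;0;1]; [:: 0;1;0;0;1;0]; [:: 0;1;0;1;1;0]; [:: 0;1;0;1;1;0]; [:: 0;1;0;1;1;0]; [:: 0;1;1;0;0;0]; [:: 0;1;1;0;0;0]; [:: 0;1;1;0;0;0]; [:: 0;1;1;0;0;1]; [:: 0;1;1;0;0;1]; [:: 0;1;1;0;0;1]; [:: 0;1;1;1;0;0]; [:: 0;1;1;1;0;0]; [:: 0;1;1;1;0;0]; [:: 1;0;0;0;0;1]; [:: 1;0;0;0;1;0]]%N.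
Definition rvn (b : seq nat) : 'rV['F_2]_6 := \row_(k < 6) (nth 0%N b k)%:R.
Definition abn (b : seq nat) : seq nat := [seq (nth 0 b k %% 2)%N | k <- iota 0 6].
Lemma ab_rvn b : ab (rvn b) = abn b.
Proof.
rewrite /ab /abn; apply/eq_in_map => k; rewrite mem_iota => /andP [_ hk].
by rewrite mxE bitn_nat inordK.
Qed.
Lemma check2 : all (fun j => (foldr (fun b acc => fx (abn b) j + acc) 0 Lc %% 4 == 0)%N) (iota 0 27).
Proof. by vm_compute. Qed.
Lemma check3 : odd (foldr (fun b acc => qx (abn b) + acc) 0 Lc)%N.
Proof. by vm_compute. Qed.
Lemma part2 : ~ (exists c' : 'I_27 -> algC,
       (forall j, c' j \in [:: 1; -1; 'i; - 'i]) /\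
       (forall x : 'rV['F_2]_27, (x <= Xi)%MS ->
          (-1 : algC) ^+ bitn (Qf x) = \prod_(j < 27) c' j ^+ bitn (x 0 j))).
Proof.
case=> c' [Hc Hx].
have H4 j : c' j ^+ 4 = 1.
  move: (Hc j); rewrite !inE => /or4P [] /eqP ->.
  - by rewrite expr1n.
  - by rewrite -[4%N]/(2 * 2)%N exprM sqrrN expr1n expr1n.
  - by rewrite -[4%N]/(2 * 2)%N exprM sqrCi sqrrN expr1n.
  - by rewrite -[4%N]/(2 * 2)%N exprM sqrrN sqrCi sqrrN expr1n.
have Hb b : (-1 : algC) ^+ qx (abn b) = \prod_(j < 27) c' j ^+ fx (abn b) j.
  have := Hx (rvn b *m Xi) (submxMl _ _); rewrite QxE ab_rvn => ->.
  by apply: eq_bigr => j _; rewrite entry ab_rvn.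
have E : \prod_(b <- Lc) (-1 : algC) ^+ qx (abn b) =
         \prod_(b <- Lc) \prod_(j < 27) c' j ^+ fx (abn b) j.
  by apply: eq_bigr => b _; apply: Hb.
rewrite prodrXr exchange_big /= in E.
rewrite (eq_bigr (fun j : 'I_27 => c' j ^+ (\sum_(b <- Lc) fx (abn b) j))) in E; last first.
  by move=> j _; rewrite prodrXr.
rewrite [X in _ = X]big1 in E; last first.
  move=> j _; rewrite (divn_eq (\sum_(b <- Lc) fx (abn b) j) 4).
  have -> : ((\sum_(b <- Lc) fx (abn b) j) %% 4 = 0)%N.
    by rewrite sumfold; apply/eqP; apply: (allP check2); rewrite mem_iota /=.
  by rewrite addn0 mulnC exprM H4 expr1n.
move: E; rewrite -signr_odd sumfold check3 expr1 => /eqP.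
by rewrite -subr_eq0 -opprD oppr_eq0 -mulr2n pnatr_eq0.
Qed.
Theorem mainTheorem2 :
  (forall x : 'rV['F_2]_27, (x <= Xi)%MS ->
     (-1 : algC) ^+ bitn (Qf x) = \prod_(j < 27) cph j ^+ bitn (x 0 j))
  /\
  ~ (exists c' : 'I_27 -> algC,
       (forall j, c' j \in [:: 1; -1; 'i; - 'i]) /\
       (forall x : 'rV['F_2]_27, (x <= Xi)%MS ->
          (-1 : algC) ^+ bitn (Qf x) = \prod_(j < 27) c' j ^+ bitn (x 0 j))).
Proof. split; [exact: part1 | exact: part2]. Qed.
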